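(* Let $J_1,\dots,J_7$ be pairwise anticommuting orthogonal complex structures on $\mathfrak a=\mathbb R^8$ and $V=\mathrm{Span}(J_1,\dots,J_5,J_6,J_6J_7)$, with an inner product whose restriction to $\mathrm{Span}(J_1,\dots,J_5)$ is standard, with $\mathrm{Span}(J_6,J_6J_7)\perp\mathrm{Span}(J_1,\dots,J_5)$, and whose restriction to $\mathrm{Span}(J_6,J_6J_7)$ is arbitrary. Then $(V,\langle\cdot,\cdot\rangle)$ is a WS-pair, while $V$ is not non-singular.
   Context: Orthogonal complex structures on $\mathbb R^8$ are orthogonal matrices $J$ with $J^2=-I_8$. An inner product on $V\subset\mathfrak{so}(8)$ is standard if it is a positive multiple of $(J,K)\mapsto-\mathrm{Tr}(JK)$. $V$ is non-singular if every nonzero element of $V$ is invertible. For a Euclidean space $\mathfrak a$, a subspace $V\subset\mathfrak{so}(\mathfrak a)$ with inner product $\langle\cdot,\cdot\rangle$ defines the metric 2-step nilpotent Lie algebra $\mathfrak n=V\oplus\mathfrak a$ (orthogonal sum, $V$ central, $\langle J,[X,Y]\rangle=\langle JX,Y\rangle$); it is a WS-pair if the corresponding simply connected nilpotent Lie group with left-invariant metric is weakly symmetric. Standing fact: this holds iff for every $J\in V$, $X\in\mathfrak a$ there is $N\in\mathcal N(V)=\{N\in O(\mathfrak a): NVN^{-1}\subset V$, $K\mapsto NKN^{-1}$ orthogonal on $(V,\langle\cdot,\cdot\rangle)\}$ with $NX=-X$, $NJ=-JN$. *)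

(* Defs.v *)
From HB Require Import structures.
From mathcomp Require Import all_boot all_order all_algebra.
From mathcomp Require Import reals.
Set Implicit Arguments. Unset Strict Implicit. Unset Printing Implicit Defensive.
Import Order.TTheory GRing.Theory Num.Theory.
Local Open Scope ring_scope.

Section Defs.
Variable R : realType.

Definition ocs (J : 'M[R]_8) : Prop := J^T *m J = 1%:M /\ J *m J = - 1%:M.

Definition in_span n (B : 'I_n -> 'M[R]_8) (A : 'M[R]_8) : Prop :=
  exists a : 'I_n -> R, A = \sum_(i < n) a i *: B i.

Definition inner_product_on (V : 'M[R]_8 -> Prop) (ip : 'M[R]_8 -> 'M[R]_8 -> R) : Prop :=
  [/\ (forall (a : R) x y z, V x -> V y -> V z -> ip (a *: x + y) z = a * ip x z + ip y z),
      (forall x y, V x -> V y -> ip x y = ip y x)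
    & (forall x, V x -> x != 0 -> 0 < ip x x)].

Definition std_form (K L : 'M[R]_8) : R := - \tr (K *m L).

Definition in_NV (V : 'M[R]_8 -> Prop) (ip : 'M[R]_8 -> 'M[R]_8 -> R) (N : 'M[R]_8) : Prop :=
  [/\ N^T *m N = 1%:M,
      (forall K, V K -> V (N *m K *m invmx N))
    & (forall K L, V K -> V L ->
         ip (N *m K *m invmx N) (N *m L *m invmx N) = ip K L)].

(* WS-pair, via the standing criterion. *)
Definition WS_pair (V : 'M[R]_8 -> Prop) (ip : 'M[R]_8 -> 'M[R]_8 -> R) : Prop :=
  forall (J : 'M[R]_8) (X : 'cV[R]_8), V J ->
    exists N : 'M[R]_8, [/\ in_NV V ip N, N *m X = - X & N *m J = - (J *m N)].

Definition nonsingular (V : 'M[R]_8 -> Prop) : Prop :=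
  forall A, V A -> A != 0 -> A \in unitmx.

(* With J : 'I_7 -> 'M_8 (J i = J_{i+1}):
   V7 J = (J_1,...,J_6, J_6 J_7), S5 J = (J_1..J_5), S2 J = (J_6, J_6 J_7). *)
Definition V7 (J : 'I_7 -> 'M[R]_8) : 'I_7 -> 'M[R]_8 :=
  fun i => if (i : nat) == 6%N then J (inord 5) *m J (inord 6) else J i.
Definition S5 (J : 'I_7 -> 'M[R]_8) : 'I_5 -> 'M[R]_8 := fun i => J (inord i).
Definition S2 (J : 'I_7 -> 'M[R]_8) : 'I_2 -> 'M[R]_8 :=
  fun i => if (i : nat) == 0%N then J (inord 5) else J (inord 5) *m J (inord 6).

End Defs.

(* Main.v *)
Require Import Defs.
From HB Require Import structures.
From mathcomp Require Import all_boot all_order all_algebra.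
From mathcomp Require Import reals ring lra.
Import Order.TTheory GRing.Theory Num.Theory.
Local Open Scope ring_scope.

Section S.
Variable R : realType.
Variable J : 'I_7 -> 'M[R]_8.
Hypothesis Jo : forall i, ocs (J i).
Hypothesis Jac : forall i j, i != j -> J i *m J j = - (J j *m J i).

Lemma trZ m n (c : R) (A : 'M[R]_(m,n)) : (c *: A)^T = c *: A^T.
Proof. by apply/matrixP => i j; rewrite !mxE. Qed.

Lemma trS n (F : 'I_n -> 'M[R]_8) : (\sum_(i < n) F i)^T = \sum_(i < n) (F i)^T.
Proof.
apply/matrixP => p q; rewrite mxE !summxE; apply: eq_bigr => i _; by rewrite mxE.
Qed.

Lemma trN m n (A : 'M[R]_(m,n)) : (- A)^T = - A^T.
Proof. by apply/matrixP => i j; rewrite !mxE. Qed.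

Lemma JJ i : J i *m J i = - 1%:M.
Proof. by case: (Jo i). Qed.

Lemma JT i : (J i)^T = - J i.
Proof.
case: (Jo i) => h1 h2.
by rewrite -[_^T]mulmx1 -[1%:M]opprK -h2 mulmxN mulmxA h1 mul1mx.
Qed.

Definition vec (a : 'I_5 -> R) : 'M[R]_8 := \sum_(i < 5) a i *: J (inord i).
Definition dot (a b : 'I_5 -> R) : R := \sum_(i < 5) a i * b i.

Lemma inord_inj5 (i j : 'I_5) : (inord i == inord j :> 'I_7) = (i == j).
Proof.
apply/eqP/eqP => [h|->//]; apply: val_inj => /=.
have := congr1 (@nat_of_ord 7) h.
rewrite (@inordK 6 i) ?(@inordK 6 j) //.
  exact: (leq_trans (ltnW (ltn_ord j))).
exact: (leq_trans (ltnW (ltn_ord i))).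
Qed.

Lemma Jd (i j : 'I_5) :
  J (inord i) *m J (inord j) + J (inord j) *m J (inord i)
  = (if i == j then - 2 else 0) *: 1%:M.
Proof.
case: eqP => [->|/eqP ne].
  by rewrite JJ scaleNr scaler_nat mulr2n opprD.
by rewrite Jac ?addNr ?scale0r // inord_inj5.
Qed.

Lemma vec_mul a b :
  vec a *m vec b = \sum_(i < 5) \sum_(j < 5) (a i * b j) *: (J (inord i) *m J (inord j)).
Proof.
rewrite /vec mulmx_suml; apply: eq_bigr => i _.
rewrite -scalemxAl mulmx_sumr scaler_sumr; apply: eq_bigr => j _.
by rewrite -scalemxAr scalerA.
Qed.

Lemma cliff a b : vec a *m vec b + vec b *m vec a = - (2 * dot a b) *: 1%:M.
Proof.
rewrite !vec_mul [X in _ + X]exchange_big /= -big_split /=.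
rewrite /dot mulr_sumr scaleNr scaler_suml -sumrN.
apply: eq_bigr => i _; rewrite -big_split /=.
rewrite (bigD1 i) //= big1 ?addr0.
  rewrite mulrC -scalerDr Jd eqxx scalerA -scaleNr; congr (_ *: _); ring.
move=> j /negbTE ne; rewrite [b j * _]mulrC -scalerDr Jd eq_sym ne.
by rewrite scale0r scaler0.
Qed.

Lemma dot_ge0 a : 0 <= dot a a.
Proof. by apply: sumr_ge0 => i _; rewrite -expr2 sqr_ge0. Qed.

Lemma dot_eq0 a : dot a a = 0 -> forall i, a i = 0.
Proof.
move=> h i.
have h' : \sum_(j < 5) a j ^+ 2 = 0.
  by rewrite -[RHS]h /dot; apply: eq_bigr => j _; rewrite expr2.
have := psumr_eq0P (fun j _ => sqr_ge0 (a j)) h' (i := i) isT.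
by move/eqP; rewrite sqrf_eq0 => /eqP.
Qed.

Lemma kernel_exists (a : 'I_5 -> R) (X Y : 'cV[R]_8) :
  Y != 0 ->
  (forall i : 'I_5, (J (inord i) *m Y)^T *m Y = 0) ->
  (forall i : 'I_5, (J (inord i) *m X)^T *m Y = 0) ->
  exists al be : 'I_5 -> R,
   [/\ 0 < dot al al + dot be be, vec al *m Y + vec be *m X = 0,
       dot al a = 0 & dot be a = 0].
Proof.
move=> Y0 hY hX.
pose P1 : 'M[R]_(5,8) := \matrix_(i < 5) (J (inord i) *m Y)^T.
pose P3 : 'M[R]_(5,8) := \matrix_(i < 5) (J (inord i) *m X)^T.
pose ac : 'cV[R]_5 := \col_i a i.
pose P2 : 'M[R]_(5,1+1) := row_mx ac 0.
pose P4 : 'M[R]_(5,1+1) := row_mx 0 ac.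
pose Psi : 'M[R]_10 := block_mx P1 P2 P3 P4.
have hP1 : P1 *m Y = 0.
  by apply/row_matrixP => i; rewrite row_mul rowK row0; exact: hY.
have hP3 : P3 *m Y = 0.
  by apply/row_matrixP => i; rewrite row_mul rowK row0; exact: hX.
have hdet : \det Psi == 0.
  rewrite -det_tr; apply/det0P.
  exists (row_mx Y^T (0 : 'rV[R]_(1+1))).
    change (row_mx Y^T (0 : 'rV[R]_(1+1)) != (0 : 'M_(1, 8+(1+1)))).
    by rewrite row_mx_eq0 negb_and trmx_eq0 Y0.
  rewrite -(trmxK (row_mx _ _)) -trmx_mul tr_row_mx trmxK trmx0.
  have -> : Psi *m col_mx Y 0 = col_mx (P1 *m Y + P2 *m 0) (P3 *m Y + P4 *m 0).
    exact: (mul_block_col P1 P2 P3 P4 Y 0).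
  rewrite hP1 hP3 !mulmx0 !addr0 col_mx0.
  by apply/matrixP => i j; rewrite !mxE.
have /det0P [v v0 hv] := hdet.
set al' := lsubmx (v : 'rV_(5+5)); set be' := rsubmx (v : 'rV_(5+5)).
have hv' : row_mx (al' *m P1 + be' *m P3) (al' *m P2 + be' *m P4) = 0.
  rewrite -hv -[v in RHS](hsubmxK (v : 'rV_(5+5))).
  by symmetry; exact: (mul_row_block al' be' P1 P2 P3 P4).
have /eqP := hv'; rewrite row_mx_eq0 => /andP[/eqP h1 /eqP h2].
pose al i := al' 0 i; pose be i := be' 0 i.
exists al, be.
have e1 : forall (c' : 'rV[R]_5) (Z : 'cV[R]_8),
    c' *m (\matrix_(i < 5) (J (inord i) *m Z)^T) = (vec (fun i => c' 0 i) *m Z)^T.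
  move=> c' Z; rewrite mulmx_sum_row /vec mulmx_suml raddf_sum.
  by apply: eq_bigr => i _; rewrite rowK -scalemxAl; apply/matrixP => k l; rewrite !mxE.
have e2 : forall (c' : 'rV[R]_5), (c' *m ac) 0 0 = dot (fun i => c' 0 i) a.
  by move=> c'; rewrite !mxE; apply: eq_bigr => i _; rewrite mxE.
move: h2; rewrite !mul_mx_row !mulmx0 add_row_mx add0r addr0 => /eqP.
rewrite row_mx_eq0 => /andP[/eqP h3 /eqP h4].
split.
- rewrite lt0r addr_ge0 ?dot_ge0 // andbT; apply/negP => /eqP hs.
  have ha : dot al al = 0.
    by apply/eqP; rewrite eq_le dot_ge0 andbT -hs lerDl dot_ge0.
  have hb : dot be be = 0 by move: hs; rewrite ha add0r.
  move/negP: v0; apply; rewrite -(hsubmxK (v : 'rV_(5+5))).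
  have -> : lsubmx (v : 'rV_(5+5)) = 0.
    by apply/rowP => i; rewrite [RHS]mxE; exact: (dot_eq0 _ ha i).
  have -> : rsubmx (v : 'rV_(5+5)) = 0.
    by apply/rowP => i; rewrite [RHS]mxE; exact: (dot_eq0 _ hb i).
  by rewrite row_mx0.
- apply: trmx_inj; rewrite trmx0 raddfD /= -!e1 //.
- by rewrite -e2 h3 mxE.
- by rewrite -e2 h4 mxE.
Qed.

Lemma vec_sq a : vec a *m vec a = - dot a a *: 1%:M.
Proof.
have h := cliff a a; rewrite -mulr2n in h.
have h2 : (2 : R) != 0 by rewrite pnatr_eq0.
apply: (@scalerI _ _ 2 h2).
by rewrite scaler_nat h scalerA mulrN scaleNr -scaleNr.
Qed.

Lemma vecT a : (vec a)^T = - vec a.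
Proof.
rewrite /vec trS -sumrN; apply: eq_bigr => i _.
by rewrite trZ JT scalerN.
Qed.

Lemma J_anti_vec (k : 'I_7) a : (5 <= k)%N -> J k *m vec a = - (vec a *m J k).
Proof.
move=> hk; rewrite /vec mulmx_sumr mulmx_suml -sumrN; apply: eq_bigr => i _.
rewrite -scalemxAr -scalemxAl -scalerN Jac //.
  by rewrite opprK.
apply/negP => /eqP e; have := congr1 (@nat_of_ord 7) e.
rewrite inordK; last exact: (leq_trans (ltnW (ltn_ord i))).
by move=> e'; move: (ltn_ord i); rewrite e' ltnNge hk.
Qed.

Lemma vec_lin c d a b : c *: vec a + d *: vec b = vec (fun i => c * a i + d * b i).
Proof.
rewrite /vec !scaler_sumr -big_split; apply: eq_bigr => i _.
by rewrite !scalerA scalerDl.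
Qed.

Lemma sandwich a k : vec a *m vec k *m vec a = dot a a *: vec k - (2 * dot a k) *: vec a.
Proof.
have h : vec a *m vec k = - (vec k *m vec a) - (2 * dot a k) *: 1%:M.
  by rewrite -scaleNr -(cliff a k) addrCA addNr addr0.
rewrite h mulmxDl mulNmx -mulmxA vec_sq scaleNr mulmxN opprK -scalemxAr mulmx1.
by rewrite mulNmx -scalemxAl mul1mx.
Qed.

Lemma sandwich_vec a k : exists k', vec a *m vec k *m vec a = vec k'.
Proof.
exists (fun i => dot a a * k i + (- (2 * dot a k)) * a i).
by rewrite sandwich -vec_lin scaleNr.
Qed.

Lemma skew_quad (T : 'M[R]_8) (X : 'cV[R]_8) : T^T = - T -> X^T *m T *m X = 0.
Proof.
move=> hT; set q := X^T *m T *m X.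
have hq : q^T = - q by rewrite /q !trmx_mul trmxK hT mulNmx mulmxN mulmxA.
have hq' : q^T = q by apply/matrixP => i j; rewrite !ord1 mxE.
clearbody q.
have e := congr1 (fun m : 'M[R]_1 => m ord0 ord0) hq; rewrite hq' /= mxE in e.
apply/matrixP => i j; rewrite !ord1 [RHS]mxE.
by move: e; set x := q ord0 ord0; lra.
Qed.

Lemma normX_pos (X : 'cV[R]_8) : X != 0 -> 0 < (X^T *m X) 0 0.
Proof.
move=> X0; rewrite mxE lt0r; apply/andP; split; last first.
  by apply: sumr_ge0 => i _; rewrite mxE -expr2 sqr_ge0.
apply/negP => /eqP h; move/negP: X0; apply; apply/eqP.
have h' : \sum_(j < 8) (X j 0) ^+ 2 = 0.
  by rewrite -[RHS]h; apply: eq_bigr => j _; rewrite mxE expr2.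
apply/matrixP => i j; rewrite ord1 [RHS]mxE.
have := psumr_eq0P (fun j _ => sqr_ge0 (X j 0)) h' (i := i) isT.
by move/eqP; rewrite sqrf_eq0 => /eqP.
Qed.

Local Notation J6 := (J (inord 5)).
Local Notation J7 := (J (inord 6)).

Lemma span_add n (B : 'I_n -> 'M[R]_8) c x y :
  in_span B x -> in_span B y -> in_span B (c *: x + y).
Proof.
move=> [a ->] [b ->]; exists (fun i => c * a i + b i).
rewrite scaler_sumr -big_split; apply: eq_bigr => i _.
by rewrite scalerDl scalerA.
Qed.

Lemma span0 n (B : 'I_n -> 'M[R]_8) : in_span B 0.
Proof. by exists (fun=> 0); rewrite big1 // => i _; rewrite scale0r. Qed.

Lemma span_basis n (B : 'I_n -> 'M[R]_8) i : in_span B (B i).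
Proof.
exists (fun j => (j == i)%:R); rewrite (bigD1 i) //= big1 ?addr0 ?eqxx ?scale1r //.
by move=> j /negbTE ->; rewrite scale0r.
Qed.

Lemma span_sum n m (B : 'I_n -> 'M[R]_8) (F : 'I_m -> 'M[R]_8) (c : 'I_m -> R) :
  (forall i, in_span B (F i)) -> in_span B (\sum_(i < m) c i *: F i).
Proof.
move=> hF; apply: (big_ind (in_span B)); first exact: span0.
  by move=> x y hx hy; rewrite -[x]scale1r; apply: span_add.
by move=> i _; rewrite -[_ *: _]addr0; apply: span_add => //; apply: span0.
Qed.

Lemma inord_lt5 (i : 'I_5) : (@inord 6 i : nat) = i.
Proof. by rewrite inordK //; exact: (leq_trans (ltnW (ltn_ord i))). Qed.

Lemma V7_lo (i : 'I_5) : V7 J (inord i) = J (inord i).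
Proof.
rewrite /V7 inord_lt5; case: eqP => // e.
by move: (ltn_ord i); rewrite e.
Qed.

Lemma V7_5 : V7 J (inord 5) = J6.
Proof. by rewrite /V7 inordK. Qed.

Lemma V7_6 : V7 J (inord 6) = J6 *m J7.
Proof. by rewrite /V7 inordK. Qed.

Definition S2v (b c : R) := b *: J6 + c *: (J6 *m J7).

Lemma inV_vec k : in_span (V7 J) (vec k).
Proof. apply: span_sum => i; rewrite -V7_lo; exact: span_basis. Qed.

Lemma inV_S b c : in_span (V7 J) (S2v b c).
Proof.
apply: span_add; first by rewrite -V7_5; exact: span_basis.
rewrite -[_ *: _]addr0; apply: span_add; last exact: span0.
by rewrite -V7_6; exact: span_basis.
Qed.

Lemma inV_sum k b c : in_span (V7 J) (vec k + S2v b c).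
Proof. by rewrite -[vec k]scale1r; apply: span_add; [exact: inV_vec | exact: inV_S]. Qed.

Lemma inS5_vec k : in_span (S5 J) (vec k).
Proof. by exists k. Qed.

Lemma inS2 b c : in_span (S2 J) (S2v b c).
Proof.
exists (fun i : 'I_2 => if (i : nat) == 0%N then b else c).
by rewrite big_ord_recl big_ord_recl big_ord0 addr0 /S2 /=.
Qed.

Lemma sum7 (F : 'I_7 -> 'M[R]_8) :
  \sum_(i < 7) F i = \sum_(i < 5) F (inord i) + F (inord 5) + F (inord 6).
Proof.
rewrite big_ord_recr big_ord_recr /=.
congr (_ + _ + _).
- apply: eq_bigr => i _; congr F; apply: val_inj; by rewrite /= inord_lt5.
- by congr F; apply: val_inj; rewrite /= inordK.
- by congr F; apply: val_inj; rewrite /= inordK.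
Qed.

Lemma V_dec K : in_span (V7 J) K -> exists k b c, K = vec k + S2v b c.
Proof.
move=> [a ->]; exists (fun i => a (inord i)), (a (inord 5)), (a (inord 6)).
rewrite sum7 V7_5 V7_6 /S2v addrA; congr (_ + _ + _).
by apply: eq_bigr => i _; rewrite V7_lo.
Qed.

Lemma vecN k : - vec k = vec (fun i => - k i).
Proof. by rewrite /vec -sumrN; apply: eq_bigr => i _; rewrite scaleNr. Qed.

Lemma S2vN b c : - S2v b c = S2v (- b) (- c).
Proof. by rewrite /S2v opprD !scaleNr. Qed.

Lemma inv_orth (N : 'M[R]_8) : N^T *m N = 1%:M -> invmx N = N^T.
Proof.
move=> h; have [_ Nu] := mulmx1_unit h.
by rewrite -[invmx N]mul1mx -h -mulmxA mulmxV // mulmx1.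
Qed.

Lemma le5_6 : (5 <= (@inord 6 6 : 'I_7))%N. Proof. by rewrite inordK. Qed.
Lemma le5_5 : (5 <= (@inord 6 5 : 'I_7))%N. Proof. by rewrite inordK. Qed.

Lemma J7vec k : J7 *m vec k = - (vec k *m J7).
Proof. exact: J_anti_vec le5_6. Qed.
Lemma J6vec k : J6 *m vec k = - (vec k *m J6).
Proof. exact: J_anti_vec le5_5. Qed.

Lemma J67 : J6 *m J7 = - (J7 *m J6).
Proof.
apply: Jac; apply/negP => /eqP e; have := congr1 (@nat_of_ord 7) e.
by rewrite !inordK.
Qed.

Section Conj.
Variable M : 'M[R]_8.
Hypothesis MM : M^T *m M = 1%:M.
Hypothesis M6 : M *m J6 = J6 *m M.
Hypothesis M7 : M *m J7 = J7 *m M.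

Lemma MMT : M *m M^T = 1%:M.
Proof. exact: mulmx1C. Qed.

Lemma NN : (J7 *m M)^T *m (J7 *m M) = 1%:M.
Proof.
rewrite trmx_mul JT mulmxN mulNmx !mulmxA -(mulmxA M^T) JJ.
by rewrite mulmxN mulmx1 mulNmx opprK MM.
Qed.

Lemma conj_gen (K : 'M[R]_8) : (J7 *m M) *m K *m (J7 *m M)^T = - (J7 *m (M *m K *m M^T) *m J7).
Proof.
by rewrite trmx_mul JT !mulmxN !mulmxA.
Qed.

Hypothesis M3 : forall k, exists k', M *m vec k *m M^T = vec k'.

Definition cj (K : 'M[R]_8) := (J7 *m M) *m K *m (J7 *m M)^T.

Lemma cj_vec k : cj (vec k) = - (M *m vec k *m M^T).
Proof.
rewrite /cj conj_gen; have [k' ->] := M3 k.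
by rewrite J7vec mulNmx -mulmxA JJ mulmxN mulmx1 opprK.
Qed.

Lemma cj_J6 : cj J6 = - J6.
Proof.
rewrite /cj conj_gen M6 -(mulmxA J6 M M^T) MMT mulmx1.
have h : J7 *m J6 = - (J6 *m J7) by rewrite J67 opprK.
by rewrite h mulNmx -mulmxA JJ mulmxN mulmx1 opprK.
Qed.

Lemma cj_J7 : cj J7 = J7.
Proof.
rewrite /cj conj_gen M7 -(mulmxA J7 M M^T) MMT mulmx1 JJ mulNmx mul1mx opprK.
by [].
Qed.

Lemma cj_mul A B : cj (A *m B) = cj A *m cj B.
Proof.
rewrite /cj; have h := NN; set N := J7 *m M in h *.
by rewrite -[A in LHS]mulmx1 -h !mulmxA.
Qed.

Lemma cjD A B : cj (A + B) = cj A + cj B.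
Proof. by rewrite /cj mulmxDr mulmxDl. Qed.

Lemma cjZ (a : R) A : cj (a *: A) = a *: cj A.
Proof. by rewrite /cj -scalemxAr -scalemxAl. Qed.

Lemma cj_S b c : cj (S2v b c) = - S2v b c.
Proof.
rewrite /S2v cjD !cjZ cj_mul cj_J6 cj_J7 opprD -!scalerN.
by rewrite mulNmx.
Qed.

Lemma cj_V k b c : cj (vec k + S2v b c) = - (M *m vec k *m M^T) - S2v b c.
Proof. by rewrite cjD cj_vec cj_S. Qed.

Lemma cj_inv K : (J7 *m M) *m K *m invmx (J7 *m M) = cj K.
Proof. by rewrite inv_orth // NN. Qed.

Lemma std_inv K L :
  std_form (- (M *m K *m M^T)) (- (M *m L *m M^T)) = std_form K L.
Proof.
rewrite /std_form mulNmx mulmxN opprK.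
rewrite !mulmxA -(mulmxA (M *m K) M^T M) MM mulmx1 -(mulmxA (M *m K)).
by rewrite !mulmxA mxtrace_mulC !mulmxA MM mul1mx.
Qed.

Variable ip : 'M[R]_8 -> 'M[R]_8 -> R.
Variable c0 : R.
Hypothesis Hip : inner_product_on (in_span (V7 J)) ip.
Hypothesis Hc : forall K L, in_span (S5 J) K -> in_span (S5 J) L ->
  ip K L = c0 * std_form K L.
Hypothesis Hperp : forall K L, in_span (S5 J) K -> in_span (S2 J) L -> ip K L = 0.

Lemma ip_lin a x y z : in_span (V7 J) x -> in_span (V7 J) y -> in_span (V7 J) z ->
  ip (a *: x + y) z = a * ip x z + ip y z.
Proof. by case: Hip => h _ _; apply: h. Qed.

Lemma ip_sym x y : in_span (V7 J) x -> in_span (V7 J) y -> ip x y = ip y x.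
Proof. by case: Hip => _ h _; apply: h. Qed.

Lemma ipD x y z : in_span (V7 J) x -> in_span (V7 J) y -> in_span (V7 J) z ->
  ip (x + y) z = ip x z + ip y z.
Proof. by move=> hx hy hz; rewrite -[x in LHS]scale1r ip_lin // mul1r. Qed.

Lemma ip0 z : in_span (V7 J) z -> ip 0 z = 0.
Proof.
move=> hz; have s0 : in_span (V7 J) 0 := span0 _ _.
have h := @ipD 0 0 z s0 s0 hz.
by rewrite addr0 in h; move: h; set x := ip 0 z; lra.
Qed.

Lemma ipN x z : in_span (V7 J) x -> in_span (V7 J) z -> ip (- x) z = - ip x z.
Proof.
move=> hx hz; have s0 : in_span (V7 J) 0 := span0 _ _.
have := @ip_lin (-1) x 0 z hx s0 hz.
by rewrite addr0 scaleN1r ip0 // addr0 mulN1r.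
Qed.

Lemma ipNN x z : in_span (V7 J) x -> in_span (V7 J) z -> ip (- x) (- z) = ip x z.
Proof.
move=> hx hz; have hz' : in_span (V7 J) (- z).
  by rewrite -scaleN1r -[_ *: _]addr0; apply: span_add => //; apply: span0.
by rewrite ipN // ip_sym // ipN // ip_sym // opprK.
Qed.

Lemma ipDr x y z : in_span (V7 J) x -> in_span (V7 J) y -> in_span (V7 J) z ->
  ip z (x + y) = ip z x + ip z y.
Proof.
move=> hx hy hz; have hxy : in_span (V7 J) (x + y).
  by rewrite -[x]scale1r; apply: span_add.
by rewrite ip_sym // ipD // ip_sym // [ip y z]ip_sym.
Qed.

Lemma ip_split k1 b1 c1 k2 b2 c2 :
  ip (vec k1 + S2v b1 c1) (vec k2 + S2v b2 c2)
  = c0 * std_form (vec k1) (vec k2) + ip (S2v b1 c1) (S2v b2 c2).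
Proof.
have V1 := inV_vec k1; have V2 := inV_vec k2.
have W1 := inV_S b1 c1; have W2 := inV_S b2 c2.
have U2 := inV_sum k2 b2 c2.
have e1 : ip (vec k1) (vec k2) = c0 * std_form (vec k1) (vec k2).
  by apply: Hc; apply: inS5_vec.
have e2 : ip (vec k1) (S2v b2 c2) = 0.
  by apply: Hperp; [apply: inS5_vec | apply: inS2].
have e3 : ip (S2v b1 c1) (vec k2) = 0.
  by rewrite ip_sym //; apply: Hperp; [apply: inS5_vec | apply: inS2].
by rewrite ipD // !(ipDr (vec k2) (S2v b2 c2)) // e1 e2 e3 addr0 add0r.
Qed.

Lemma NV : in_NV (in_span (V7 J)) ip (J7 *m M).
Proof.
split; first exact: NN.
  move=> K /V_dec [k [b [c ->]]]; rewrite cj_inv cj_V.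
  have [k' ->] := M3 k; rewrite vecN S2vN; exact: inV_sum.
move=> K L /V_dec [k1 [b1 [c1 ->]]] /V_dec [k2 [b2 [c2 ->]]].
rewrite !cj_inv !cj_V.
have [k1' e1] := M3 k1; have [k2' e2] := M3 k2.
rewrite {1}e1 {1}e2 !vecN !S2vN !ip_split -!vecN -e1 -e2 std_inv.
by rewrite -!S2vN ipNN //; apply: inV_S.
Qed.

Lemma N_anti ja jb jc : M *m vec ja *m M^T = vec ja ->
  (J7 *m M) *m (vec ja + S2v jb jc) = - ((vec ja + S2v jb jc) *m (J7 *m M)).
Proof.
move=> hA; have h := cj_V ja jb jc; rewrite hA -opprD in h.
rewrite -[LHS]mulmx1 -NN mulmxA.
by move: h; rewrite /cj => ->; rewrite mulNmx.
Qed.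

End Conj.

Lemma vecZ c k : c *: vec k = vec (fun i => c * k i).
Proof. by rewrite /vec scaler_sumr; apply: eq_bigr => i _; rewrite scalerA. Qed.

Section Mdef.
Variables al be : 'I_5 -> R.
Variable s : R.
Hypothesis hs : s * s * (dot al al * dot be be) = 1.
Definition Mx := s *: (vec al *m vec be).

Lemma MxT : Mx^T = s *: (vec be *m vec al).
Proof. by rewrite /Mx trZ trmx_mul !vecT mulNmx mulmxN opprK. Qed.

Lemma Mx_orth : Mx^T *m Mx = 1%:M.
Proof.
rewrite MxT /Mx -scalemxAl -scalemxAr scalerA !mulmxA.
rewrite -(mulmxA (vec be) (vec al) (vec al)) vec_sq.
rewrite -scalemxAr mulmx1 -scalemxAl vec_sq scalerA scalerA.
have -> : s * s * - dot al al * - dot be be = 1 by rewrite -hs; ring.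
by rewrite scale1r.
Qed.

Lemma Mx_J (k : 'I_7) : (5 <= k)%N -> Mx *m J k = J k *m Mx.
Proof.
move=> hk; rewrite /Mx -scalemxAl -scalemxAr; congr (_ *: _).
have h : forall a, vec a *m J k = - (J k *m vec a).
  by move=> a; rewrite J_anti_vec // opprK.
by rewrite -mulmxA h mulmxN mulmxA h mulNmx opprK mulmxA.
Qed.

Lemma Mx_span k : exists k', Mx *m vec k *m Mx^T = vec k'.
Proof.
rewrite MxT /Mx -!scalemxAl -scalemxAr scalerA.
have -> : vec al *m vec be *m vec k *m (vec be *m vec al)
  = vec al *m (vec be *m vec k *m vec be) *m vec al by rewrite !mulmxA.
have [k1 ->] := sandwich_vec be k; have [k2 ->] := sandwich_vec al k1.
by rewrite vecZ; eexists.
Qed.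

Lemma Mx_fix ja : dot al ja = 0 -> dot be ja = 0 -> Mx *m vec ja *m Mx^T = vec ja.
Proof.
move=> ha hb.
rewrite MxT /Mx -!scalemxAl -scalemxAr scalerA.
have -> : vec al *m vec be *m vec ja *m (vec be *m vec al)
  = vec al *m (vec be *m vec ja *m vec be) *m vec al by rewrite !mulmxA.
rewrite sandwich hb mulr0 scale0r subr0 -scalemxAr -scalemxAl sandwich ha.
rewrite mulr0 scale0r subr0 !scalerA.
have -> : s * s * dot be be * dot al al = 1 by rewrite -hs; ring.
by rewrite scale1r.
Qed.
End Mdef.

Lemma vec_norm a (Z : 'cV[R]_8) :
  (vec a *m Z)^T *m (vec a *m Z) = dot a a *: (Z^T *m Z).
Proof.
rewrite trmx_mul vecT mulmxN mulNmx !mulmxA -(mulmxA Z^T (vec a) (vec a)) vec_sq.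
by rewrite scaleNr mulmxN mulNmx opprK -scalemxAr mulmx1 -scalemxAl.
Qed.

Lemma J7_norm (Z : 'cV[R]_8) : (J7 *m Z)^T *m (J7 *m Z) = Z^T *m Z.
Proof.
case: (Jo (inord 6)) => h _.
by rewrite trmx_mul mulmxA -(mulmxA Z^T) h mulmx1.
Qed.

Lemma inord_neq (m n : nat) : (m < 7)%N -> (n < 7)%N -> m != n -> (@inord 6 m) != inord n.
Proof.
move=> hm hn ne; apply/negP => /eqP e; have := congr1 (@nat_of_ord 7) e.
by rewrite !inordK // => e'; move: ne; rewrite e' eqxx.
Qed.

Lemma Q_comm (m : nat) : (m < 5)%N -> J (inord m) *m (J6 *m J7) = J6 *m J7 *m J (inord m).
Proof.
move=> hm.
have h5 : (@inord 6 m) != inord 5 by apply: inord_neq => //; [exact: (ltn_trans hm) | rewrite neq_ltn hm].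
have h6 : (@inord 6 m) != inord 6.
  by apply: inord_neq => //; [exact: (ltn_trans hm) | rewrite neq_ltn (ltn_trans hm)].
rewrite mulmxA (Jac _ _ h5) mulNmx -(mulmxA J6 (J (inord m)) J7) (Jac _ _ h6) mulmxN opprK.
by rewrite mulmxA.
Qed.

Lemma Q_sq : (J6 *m J7) *m (J6 *m J7) = - 1%:M.
Proof.
have h76 : J7 *m J6 = - (J6 *m J7) by rewrite J67 opprK.
rewrite mulmxA -(mulmxA J6 J7 J6) h76 mulmxN mulNmx !mulmxA JJ -mulmxA JJ mulNmx mul1mx.
by rewrite !opprK.
Qed.

Lemma J01_false : J (inord 0) *m J (inord 1) = J (inord 1) *m J (inord 0) -> False.
Proof.
move=> e.
have h : J (inord 1) *m J (inord 0) = - (J (inord 1) *m J (inord 0)).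
  by rewrite -{1}e Jac //; apply: inord_neq.
have h0 : J (inord 1) *m J (inord 0) = 0.
  have : (2:R) *: (J (inord 1) *m J (inord 0)) = 0.
    by rewrite scaler_nat mulr2n {1}h addNr.
  by move/eqP; rewrite scaler_eq0 pnatr_eq0 /= => /eqP.
have h1 : J (inord 0) = 0.
  have := congr1 (mulmx (J (inord 1))) h0.
  by rewrite mulmxA JJ mulNmx mul1mx mulmx0 => /eqP; rewrite oppr_eq0 => /eqP.
have := JJ (inord 0); rewrite h1 mul0mx => /eqP; rewrite eq_sym oppr_eq0.
move/eqP/matrixP => /(_ ord0 ord0); rewrite !mxE /=.
by move/eqP; rewrite oner_eq0.
Qed.

Lemma notNS : ~ nonsingular (in_span (V7 J)).
Proof.
move=> NS.
set Q := J6 *m J7.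
set A := J (inord 0) + Q.
have e0 : V7 J (inord 0) = J (inord 0) by rewrite /V7 inordK.
have VA : in_span (V7 J) A.
  rewrite /A -[J (inord 0)]scale1r; apply: span_add.
    by rewrite -e0; apply: span_basis.
  by rewrite /Q -V7_6; apply: span_basis.
have QJ1 : J (inord 1) *m Q = Q *m J (inord 1) := Q_comm 1 isT.
have QJ0 : J (inord 0) *m Q = Q *m J (inord 0) := Q_comm 0 isT.
have A0 : A != 0.
  apply/negP => /eqP h.
  have hq : Q = - J (inord 0) by apply/eqP; rewrite -addr_eq0 addrC -/A h.
  apply: J01_false.
  have : J (inord 1) *m Q = Q *m J (inord 1) by exact: QJ1.
  by rewrite hq mulmxN mulNmx => /eqP; rewrite eqr_opp => /eqP ->.
have := NS A VA A0.
set P := J (inord 0) *m Q.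
have hA : A = J (inord 0) *m (1%:M - P).
  by rewrite mulmxBr mulmx1 /P mulmxA JJ mulNmx mul1mx opprK.
rewrite hA unitmx_mul => /andP[_ U].
have PP : P *m P = 1%:M.
  have QQ : Q *m Q = - 1%:M := Q_sq.
  rewrite /P mulmxA -(mulmxA (J (inord 0)) Q) -QJ0 !mulmxA JJ !mulNmx mul1mx -(mulmxA (J6 *m J7) J6 J7) Q_sq opprK.
  by [].
have e : (1%:M - P) *m (1%:M + P) = 0.
  by rewrite mulmxDr mulmxBl mulmxBl mul1mx mulmx1 PP mul1mx addrA subrK subrr.
have hP : 1%:M + P = 0.
  by rewrite -(mulKmx U (1%:M + P)) e mulmx0.
have hP' : P = - 1%:M by apply/eqP; rewrite -addr_eq0 addrC hP.
have hQ : Q = J (inord 0).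
  have := congr1 (mulmx (J (inord 0))) hP'.
  by rewrite /P mulmxA JJ mulNmx mul1mx mulmxN mulmx1 => /eqP; rewrite eqr_opp => /eqP.
apply: J01_false.
by rewrite -hQ QJ1.
Qed.

Section Final.
Variable ip : 'M[R]_8 -> 'M[R]_8 -> R.
Variable c0 : R.
Hypothesis Hip : inner_product_on (in_span (V7 J)) ip.
Hypothesis Hc : forall K L, in_span (S5 J) K -> in_span (S5 J) L ->
  ip K L = c0 * std_form K L.
Hypothesis Hperp : forall K L, in_span (S5 J) K -> in_span (S2 J) L -> ip K L = 0.

Lemma WS : WS_pair (in_span (V7 J)) ip.
Proof.
move=> K X /V_dec [ja [jb [jc ->]]].
case: (eqVneq X 0) => [X0 | X0].
  have MM : (1%:M : 'M[R]_8)^T *m 1%:M = 1%:M by rewrite trmx1 mulmx1.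
  have M6 : (1%:M : 'M[R]_8) *m J6 = J6 *m 1%:M by rewrite mul1mx mulmx1.
  have M7 : (1%:M : 'M[R]_8) *m J7 = J7 *m 1%:M by rewrite mul1mx mulmx1.
  have M3 : forall k, exists k', (1%:M : 'M[R]_8) *m vec k *m (1%:M)^T = vec k'.
    by move=> k; exists k; rewrite trmx1 mul1mx mulmx1.
  exists (J7 *m 1%:M); split.
  - exact: (NV _ MM M6 M7 M3 _ _ Hip Hc Hperp).
  - by rewrite X0 mulmx0 oppr0.
  - by apply: (N_anti _ MM M6 M7 M3); rewrite trmx1 mul1mx mulmx1.
pose Y := J7 *m X.
have Y0 : Y != 0.
  apply: contraNneq X0 => h; have := congr1 (mulmx J7) h.
  by rewrite /Y mulmxA JJ mulNmx mul1mx mulmx0 => /eqP; rewrite oppr_eq0.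
have hY : forall i : 'I_5, (J (inord i) *m Y)^T *m Y = 0.
  by move=> i; rewrite trmx_mul; apply: skew_quad; rewrite trmxK JT opprK.
have hX : forall i : 'I_5, (J (inord i) *m X)^T *m Y = 0.
  move=> i; rewrite trmx_mul /Y !mulmxA -(mulmxA X^T); apply: skew_quad.
  rewrite trmx_mul trmxK JT JT !mulNmx opprK Jac ?opprK //.
  apply/negP => /eqP e; have := congr1 (@nat_of_ord 7) e.
  by rewrite inordK // inord_lt5 => e'; move: (ltn_ord i); rewrite -e'.
have [al [be [pos ker ha hb]]] := kernel_exists ja X Y Y0 hY hX.
have nX := normX_pos X X0.
have ker' : vec be *m X = - (vec al *m Y).
  by apply/eqP; rewrite -addr_eq0 addrC ker.
have deq : dot al al = dot be be.
  have e1 := vec_norm al Y; have e2 := vec_norm be X.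
  rewrite ker' trN mulNmx mulmxN opprK e1 /Y J7_norm in e2.
  have := congr1 (fun m : 'M[R]_1 => m ord0 ord0) e2; rewrite /= [in LHS]mxE [in RHS]mxE => e.
  exact: (mulIf (lt0r_neq0 nX)).
have dpos : 0 < dot al al by move: pos; rewrite -deq; lra.
pose s := (dot al al)^-1.
have hs : s * s * (dot al al * dot be be) = 1.
  by rewrite -deq /s; field; rewrite lt0r_neq0.
have MM := Mx_orth al be s hs.
have M6 := Mx_J al be s (inord 5) le5_5.
have M7 := Mx_J al be s (inord 6) le5_6.
have M3 := Mx_span al be s.
exists (J7 *m Mx al be s); split.
- exact: (NV _ MM M6 M7 M3 _ _ Hip Hc Hperp).
- have MX : Mx al be s *m X = Y.
    rewrite /Mx -scalemxAl -mulmxA ker' mulmxN mulmxA vec_sq.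
    rewrite -scalemxAl mul1mx scaleNr opprK scalerA /s mulVf ?scale1r //.
    by rewrite lt0r_neq0.
  by rewrite -mulmxA MX /Y mulmxA JJ mulNmx mul1mx.
- exact: (N_anti _ MM M6 M7 M3 _ _ _ (Mx_fix al be s hs ja ha hb)).
Qed.
End Final.
End S.

Theorem mainTheorem12 (R : realType) (J : 'I_7 -> 'M[R]_8)
    (ip : 'M[R]_8 -> 'M[R]_8 -> R) :
  (forall i, ocs (J i)) ->
  (forall i j, i != j -> J i *m J j = - (J j *m J i)) ->
  inner_product_on (in_span (V7 J)) ip ->
  (exists c : R, 0 < c /\
     forall K L, in_span (S5 J) K -> in_span (S5 J) L -> ip K L = c * std_form K L) ->
  (forall K L, in_span (S5 J) K -> in_span (S2 J) L -> ip K L = 0) ->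
  WS_pair (in_span (V7 J)) ip /\ ~ nonsingular (in_span (V7 J)).
Proof.
move=> Jo Jac Hip [c0 [_ Hc]] Hperp.
split; first exact: (WS _ _ Jo Jac _ _ Hip Hc Hperp).
exact: (notNS _ _ Jo Jac).
Qed.
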